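(* Let $r_1,r_2\in(0,1)$, $a_1,a_2\in(1,\infty)$, and for $i=1,2$ let $l_i$ be Lebesgue measurable, integrable, with $\int_{\mathbb{R}}l_i=1$, $\int_{\mathbb{R}}l_i(y)e^{\lambda y}dy<\infty$ for all $\lambda\in\mathbb{R}$, and $l_i(y)=l_i(-y)\ge0$. Define $Q=(Q_1,Q_2)$ on $\mathcal{C}_{[\theta,\mathbf{1}]}$ by \[ Q_1(\phi,\psi)(t)=1-\int_{\mathbb{R}}(1-\phi (y))e^{r_{1}(\phi (y)-a_{1}\psi(y))}l_{1}(t-y)\,dy,\quad Q_2(\phi,\psi)(t)=\int_{\mathbb{R}} \psi (y)e^{r_{2}(1-a_2-\psi (y)+a_{2}\phi (y))}l_{2}(t-y)\,dy. \] Then the fixed points $\theta=(0,0)$ and $M=(1,1)$ are strongly stable from above and below, respectively: there exist $\delta>0$ and unit vectors $E_4,E_5\in\mathbb{R}^2$ with $\theta\ll E_4,E_5\ll\mathbf{1}$ such that \[ Q[\eta E_4]\ll \eta E_4,\qquad Q[M-\eta E_5]\gg M-\eta E_5\qquad\text{for all }\eta\in(0,\delta] \] (constant vectors regarded as constant functions). Moreover, the set $F\setminus\{\theta,M\}$ is totally unordered, where $F$ is the set of constant fixed points of $Q$ with values in $[\theta,M]$.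
   Context: $\mathcal{C}$ is the space of uniformly continuous bounded functions $\mathbb{R}\to\mathbb{R}^2$ with the componentwise order; $\mathcal{C}_{[\theta,\mathbf{1}]}=\{U\in\mathcal{C}: (0,0)\le U(x)\le (1,1)\ \forall x\}$. For $U=(u_1,u_2),V=(v_1,v_2)$, $U\gg V$ means $u_i(x)>v_i(x)$ for $i=1,2$ and all $x$ (and $U\ll V$ analogously). A set is totally unordered if no two distinct elements are comparable in the componentwise order. *)

(* Defs.v *)
From HB Require Import structures.
From mathcomp Require Import all_boot all_order all_algebra.
From mathcomp Require Import all_classical all_reals all_analysis.
Set Implicit Arguments. Unset Strict Implicit. Unset Printing Implicit Defensive.
Import Order.TTheory GRing.Theory Num.Theory.
Local Open Scope classical_set_scope.
Local Open Scope ring_scope.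

(* Lebesgue measure on R (completed, so that "Lebesgue measurable" is the
   measurability notion for kernels and integrands). *)
Notation lmu := (@completed_lebesgue_measure _).

Definition integR (R : realType) (f : R -> R) : R := Rintegral lmu setT f.

Definition kernel_ok (R : realType) (l : R -> R) : Prop :=
  [/\ lmu.-integrable setT (EFin \o l),
      (\int[lmu]_(y in setT) (l y)%:E = 1)%E,
      (forall lam : R, (\int[lmu]_(y in setT) (l y * expR (lam * y))%:E < +oo)%E)
    & (forall y : R, l y = l (- y) /\ 0 <= l y)].

Definition Q1 (R : realType) (r1 a1 : R) (l1 : R -> R) (phi psi : R -> R) (t : R) : R :=
  1 - integR (fun y => (1 - phi y) * expR (r1 * (phi y - a1 * psi y)) * l1 (t - y)).

Definition Q2 (R : realType) (r2 a2 : R) (l2 : R -> R) (phi psi : R -> R) (t : R) : R :=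
  integR (fun y => psi y * expR (r2 * (1 - a2 - psi y + a2 * phi y)) * l2 (t - y)).

Definition cstf (R : realType) (c : R) : R -> R := fun _ => c.

(* F : constant fixed points of Q with values in [theta, M] = [0,1]^2. *)
Definition constFix (R : realType) (r1 r2 a1 a2 : R) (l1 l2 : R -> R) (p : R * R) : Prop :=
  [/\ 0 <= p.1 <= 1, 0 <= p.2 <= 1,
      (forall t, Q1 r1 a1 l1 (cstf p.1) (cstf p.2) t = p.1)
    & (forall t, Q2 r2 a2 l2 (cstf p.1) (cstf p.2) t = p.2)].

Definition le2 (R : realType) (p q : R * R) : Prop := p.1 <= q.1 /\ p.2 <= q.2.

Definition totally_unordered (R : realType) (S : set (R * R)) : Prop :=
  forall p q, S p -> S q -> p <> q -> ~ le2 p q.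

(* Main.v *)
Require Import Defs.
From HB Require Import structures.
From mathcomp Require Import all_boot all_order all_algebra.
From mathcomp Require Import all_classical all_reals all_analysis.
From mathcomp Require Import measurable_realfun lra ring.
Import Order.TTheory GRing.Theory Num.Theory.
Local Open Scope classical_set_scope.
Local Open Scope ring_scope.

Section TP.
Variable R : realType.
Variable t : R.
Let phi := (fun y : measurableTypeR R => t - y).
Lemma mphi : measurable_fun [set: measurableTypeR R] phi.
Proof. exact: (measurable_funB (measurable_cst t) (@measurable_id _ _ _)). Qed.

Definition tpush : set (measurableTypeR R) -> \bar R := pushforward (@lebesgue_measure R) phi.

Let tpush0 : tpush set0 = 0%E.
Proof. by rewrite /tpush /pushforward preimage_set0 measure0. Qed.

Let tpush_ge0 A : (0 <= tpush A)%E.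
Proof. rewrite /tpush /pushforward; exact: measure_ge0. Qed.

Let tpush_sigma_additive : semi_sigma_additive tpush.
Proof.
move=> F mF tF mUF; rewrite /tpush /pushforward preimage_bigcup.
apply: measure_semi_sigma_additive.
- by move=> n; rewrite -[X in measurable X]setTI; apply: mphi => //; exact: mF.
- apply/trivIsetP => /= i j _ _ ij; rewrite -preimage_setI.
  by move/trivIsetP : tF => /(_ _ _ _ _ ij) ->//; rewrite preimage_set0.
- by rewrite -preimage_bigcup -[X in measurable X]setTI; apply: mphi => //; exact: mUF.
Qed.

HB.instance Definition _ := isMeasure.Build _ _ _
  tpush tpush0 tpush_ge0 tpush_sigma_additive.

Lemma borel_inv (A : set R) : measurable A ->
  lebesgue_measure (phi @^-1` A) = lebesgue_measure A.
Proof.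
move=> mA; apply/esym.
have := @lebesgue_measure_unique R tpush _ A mA. apply.
move=> _ [[a b]] _ <-.
rewrite /tpush /pushforward.
rewrite /= /tpush /pushforward (_ : phi @^-1` _ = `[t - b, t - a[%classic); last first.
  apply/seteqP; split => x /=; rewrite /phi !in_itv /=.
  - move=> /andP[h1 h2]. apply/andP; split; lra.
  - move=> /andP[h1 h2]. apply/andP; split; lra.
rewrite !lebesgue_measure_itv /= !lte_fin.
have -> : (t - b < t - a) = (a < b) by apply/idP/idP; lra.
case: ifP => // _; rewrite -!EFinB; congr (_%:E); lra.
Qed.

Let CT := caratheodory_type (R:=R) ((wlength (@idfun R))^*)%mu.
Let cphi : CT -> CT := fun y => t - y.

Lemma cmeasE (B : set CT) : measurable B <->
  exists A N M, [/\ (measurable (A : set (measurableTypeR R))), measurable (M : set (measurableTypeR R)),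
     lebesgue_measure M = 0%E, N `<=` M & B = A `|` N].
Proof.
have E : (measurable : set (set CT)) = measurable_realfun.completed_algebra_gen (@lebesgue_measure R).
  by rewrite -g_sigma_completed_algebra_genE completed_caratheodory_measurable.
rewrite E; split.
- move=> [A mA [N [M [mM M0 NM]] <-]]. by exists A, N, M.
- move=> [A [N [M [mA mM M0 NM ->]]]]. exists A => //. exists N => //. by exists M.
Qed.

Lemma lmu_nullU (A N M : set R) : measurable (A : set (measurableTypeR R)) ->
  measurable (M : set (measurableTypeR R)) -> lebesgue_measure M = 0%E -> N `<=` M ->
  lmu (A `|` N) = lebesgue_measure A.
Proof.
move=> mA mM M0 NM.
have N0 : ((wlength (@idfun R))^*)%mu N = 0%E.
  apply/eqP; rewrite eq_le outer_measure_ge0 andbT -M0.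
  exact: le_outer_measure.
apply/eqP; rewrite eq_le; apply/andP; split.
- apply: (le_trans (outer_measureU2 _ _ _)).
  rewrite [X in (_ + X <= _)%E](_ : _ = 0%E) ?adde0 //; exact: N0.
- exact: le_outer_measure.
Qed.

Lemma cmphi : measurable_fun [set: CT] cphi.
Proof.
move=> _ B mB; have [A [N [M [mA mM M0 NM EB]]]] := proj1 (cmeasE B) mB; subst B.
rewrite setTI; apply/cmeasE.
exists (phi @^-1` A), (cphi @^-1` N), (phi @^-1` M); split.
- by rewrite -[X in measurable X]setTI; apply: mphi.
- by rewrite -[X in measurable X]setTI; apply: mphi.
- by rewrite borel_inv.
- by move=> x /= /NM.
- by rewrite preimage_setU.
Qed.

Lemma cinv (B : set CT) : measurable B -> lmu (cphi @^-1` B) = lmu B.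
Proof.
move=> mB; have [A [N [M [mA mM M0 NM EB]]]] := proj1 (cmeasE B) mB; subst B.
rewrite preimage_setU (@lmu_nullU (phi @^-1` A) (cphi @^-1` N) (phi @^-1` M)).
- by rewrite borel_inv // (@lmu_nullU A N M mA mM M0 NM).
- by rewrite -[X in measurable X]setTI; apply: mphi.
- by rewrite -[X in measurable X]setTI; apply: mphi.
- by rewrite borel_inv.
- by move=> x /= /NM.
Qed.

Lemma int_shift (f : CT -> \bar R) : measurable_fun setT f -> (forall y, (0 <= f y)%E) ->
  (\int[lmu]_(y in setT) f (cphi y) = \int[lmu]_(y in setT) f y)%E.
Proof.
move=> mf f0.
have E := @ge0_integral_pushforward _ _ _ _ _ cphi cmphi lmu setT f measurableT mf (fun y _ => f0 y).
rewrite preimage_setT in E.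
transitivity (\int[lmu]_(x in setT) (f \o cphi) x)%E; first by [].
rewrite -E; refine (eq_measure_integral lmu _) => A mA AD.
change (lmu (cphi @^-1` A) = lmu A); apply: cinv. exact: mA.
Unshelve. exact: cmphi.
Qed.
End TP.

Lemma kernel_conv (R : realType) (l : R -> R) (t k : R) : kernel_ok l ->
  integR (fun y => k * l (t - y)) = k.
Proof.
move=> [il l1 _ lpos].
have ml := measurable_int lmu il.
have g1 : (\int[lmu]_(y in setT) (l (t - y))%:E = 1)%E.
  rewrite -l1. have := (@int_shift R t (EFin \o l) ml (fun y => proj2 (lpos y))). simpl. by move=> ->.
have ig : lmu.-integrable setT (EFin \o (fun y => l (t - y))).
  apply/integrableP; split.
    exact: (measurableT_comp ml (@cmphi R t)).
  under eq_integral => y _ do rewrite /= ger0_norm ?(proj2 (lpos _)) //.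
  by rewrite g1 ltry.
rewrite /integR RintegralZl //.
by rewrite /Rintegral g1 /= mulr1.
Qed.

Lemma Q1c (R : realType) (r1 a1 : R) (l1 : R -> R) x y t : kernel_ok l1 ->
  Q1 r1 a1 l1 (cstf x) (cstf y) t = 1 - (1 - x) * expR (r1 * (x - a1 * y)).
Proof. by move=> kl; rewrite /Q1 /cstf kernel_conv. Qed.

Lemma Q2c (R : realType) (r2 a2 : R) (l2 : R -> R) x y t : kernel_ok l2 ->
  Q2 r2 a2 l2 (cstf x) (cstf y) t = y * expR (r2 * (1 - a2 - y + a2 * x)).
Proof. by move=> kl; rewrite /Q2 /cstf kernel_conv. Qed.

Lemma unitvec (R : realType) (a : R) : 1 < a -> exists u v : R,
  [/\ u ^+ 2 + v ^+ 2 = 1, 0 < u < 1, 0 < v < 1 & a * v < u].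
Proof.
move=> a1.
set s := (4 * a)^-1.
have hs : s * (4 * a) = 1 by rewrite mulVf //; lra.
have s0 : 0 < s by rewrite invr_gt0; lra.
set w := (1 + s ^+ 2)^-1.
have hw : w * (1 + s ^+ 2) = 1 by rewrite mulVf // ; nra.
have w0 : 0 < w by rewrite invr_gt0; nra.
have sa : s * a = 1/4 by lra.
have s1 : s < 1/4 by nra.
exists ((1 - s ^+ 2) * w), (2 * s * w); split.
- have -> : ((1 - s ^+ 2) * w) ^+ 2 + (2 * s * w) ^+ 2 = (w * (1 + s ^+ 2)) ^+ 2 by ring.
  by rewrite hw expr1n.
- apply/andP; split; nra.
- apply/andP; split; nra.
- nra.
Qed.

Lemma deltaex (R : realType) (a1 a2 : R) : 1 < a1 -> 1 < a2 -> exists d : R,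
  [/\ 0 < d <= 1, d * a1 < a1 - 1 & d * a2 < a2 - 1].
Proof.
move=> h1 h2.
have e1 : a1^-1 * a1 = 1 by rewrite mulVf //; lra.
have e2 : a2^-1 * a2 = 1 by rewrite mulVf //; lra.
have p1 : 0 < a1^-1 by rewrite invr_gt0; lra.
have p2 : 0 < a2^-1 by rewrite invr_gt0; lra.
have q1 : a1^-1 < 1 by nra.
have q2 : a2^-1 < 1 by nra.
exists ((1 - a1^-1) * (1 - a2^-1)); split.
- apply/andP; split; nra.
- nra.
- nra.
Qed.

Lemma fixchar (R : realType) (r1 r2 a1 a2 : R) (l1 l2 : R -> R) (x y : R) :
  0 < r1 -> 0 < r2 -> 1 < a1 -> 1 < a2 -> kernel_ok l1 -> kernel_ok l2 ->
  constFix r1 r2 a1 a2 l1 l2 (x, y) -> (x, y) <> (0, 0) -> (x, y) <> (1, 1) ->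
  (x = 1 /\ y = 0) \/ [/\ x = a1 * y, y = 1 - a2 + a2 * x, x < 1 & 0 < y].
Proof.
move=> r10 r20 ha1 ha2 k1 k2 [/= /andP[x0 x1] /andP[y0 y1] hq1 hq2] n0 n1.
have := hq1 0; rewrite Q1c // => e1.
have := hq2 0; rewrite Q2c // => e2.
have c1 : x = 1 \/ x = a1 * y.
  have : (1 - x) * (expR (r1 * (x - a1 * y)) - 1) = 0 by lra.
  move/eqP; rewrite mulf_eq0 => /orP[/eqP h|/eqP h]; first by left; lra.
  right; have : expR (r1 * (x - a1 * y)) = expR 0 by rewrite expR0; lra.
  move/expR_inj/eqP; rewrite mulf_eq0 => /orP[/eqP h'|/eqP h']; lra.
have c2 : y = 0 \/ y = 1 - a2 + a2 * x.
  have : y * (expR (r2 * (1 - a2 - y + a2 * x)) - 1) = 0 by lra.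
  move/eqP; rewrite mulf_eq0 => /orP[/eqP h|/eqP h]; first by left.
  right; have : expR (r2 * (1 - a2 - y + a2 * x)) = expR 0 by rewrite expR0; lra.
  move/expR_inj/eqP; rewrite mulf_eq0 => /orP[/eqP h'|/eqP h']; lra.
case: c1 => h1; case: c2 => h2.
- by left.
- by exfalso; apply: n1; rewrite h1 h2 h1; congr pair; ring.
- by exfalso; apply: n0; rewrite h1 h2 mulr0.
- right; split => //.
  + rewrite lt_neqAle x1 andbT; apply/negP => /eqP hx.
    by apply: n1; rewrite hx; rewrite hx in h2; rewrite h2; congr pair; ring.
  + rewrite lt_neqAle y0 andbT; apply/negP => /eqP hy.
    by apply: n0; rewrite -hy; rewrite -hy mulr0 in h1; rewrite h1.
Qed.

Theorem lemma4 (R : realType) (r1 r2 a1 a2 : R) (l1 l2 : R -> R) :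
  0 < r1 < 1 -> 0 < r2 < 1 -> 1 < a1 -> 1 < a2 ->
  kernel_ok l1 -> kernel_ok l2 ->
  (exists (delta : R) (E4 E5 : R * R),
    [/\ 0 < delta <= 1,
        E4.1 ^+ 2 + E4.2 ^+ 2 = 1 /\ E5.1 ^+ 2 + E5.2 ^+ 2 = 1,
        (0 < E4.1 < 1 /\ 0 < E4.2 < 1) /\ (0 < E5.1 < 1 /\ 0 < E5.2 < 1),
        (forall eta : R, 0 < eta <= delta -> forall t : R,
            Q1 r1 a1 l1 (cstf (eta * E4.1)) (cstf (eta * E4.2)) t < eta * E4.1 /\
            Q2 r2 a2 l2 (cstf (eta * E4.1)) (cstf (eta * E4.2)) t < eta * E4.2)
      & (forall eta : R, 0 < eta <= delta -> forall t : R,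
            Q1 r1 a1 l1 (cstf (1 - eta * E5.1)) (cstf (1 - eta * E5.2)) t > 1 - eta * E5.1 /\
            Q2 r2 a2 l2 (cstf (1 - eta * E5.1)) (cstf (1 - eta * E5.2)) t > 1 - eta * E5.2)])
  /\ totally_unordered
       [set p : R * R | constFix r1 r2 a1 a2 l1 l2 p /\ p <> (0, 0) /\ p <> (1, 1)].
Proof.
move=> /andP[r10 r11] /andP[r20 r21] ha1 ha2 k1 k2; split.
  have [u [v [uv /andP[u0 u1] /andP[v0 v1] auv]]] := @unitvec R a1 ha1.
  have [u' [v' [uv' /andP[u0' u1'] /andP[v0' v1'] auv']]] := @unitvec R a2 ha2.
  have [d [/andP[d0 d1] da1 da2]] := @deltaex R a1 a2 ha1 ha2.
  exists d, (u, v), (v', u'); split.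
  - by rewrite d0 d1.
  - by rewrite /= uv; split => //; rewrite addrC.
  - by rewrite /= u0 u1 v0 v1 u0' u1' v0' v1'.
  - move=> eta /andP[e0 e1] t /=; rewrite Q1c // Q2c //; split.
    + have h : 1 < expR (r1 * (eta * u - a1 * (eta * v))).
        by rewrite expR_gt1; apply: mulr_gt0 => //; nra.
      have hx : 0 < 1 - eta * u by nra.
      have h' : 0 < expR (r1 * (eta * u - a1 * (eta * v))) - 1 by rewrite subr_gt0.
      have := mulr_gt0 hx h'; nra.
    + have h : expR (r2 * (1 - a2 - eta * v + a2 * (eta * u))) < 1.
        have h1 : eta * u <= d by nra.
        have h2 : a2 * (eta * u) <= a2 * d by rewrite ler_pM2l //; lra.
        by rewrite expR_lt1; rewrite pmulr_rlt0 //; nra.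
      have hx : 0 < eta * v by nra.
      have h' : 0 < 1 - expR (r2 * (1 - a2 - eta * v + a2 * (eta * u))) by rewrite subr_gt0.
      have := mulr_gt0 hx h'; nra.
  - move=> eta /andP[e0 e1] t /=; rewrite Q1c // Q2c //; split.
    + have h : expR (r1 * (1 - eta * v' - a1 * (1 - eta * u'))) < 1.
        have h1 : eta * u' <= d by nra.
        have h2 : a1 * (eta * u') <= a1 * d by rewrite ler_pM2l //; lra.
        by rewrite expR_lt1; rewrite pmulr_rlt0 //; nra.
      have hx : 0 < eta * v' by nra.
      have h' : 0 < 1 - expR (r1 * (1 - eta * v' - a1 * (1 - eta * u'))) by rewrite subr_gt0.
      have := mulr_gt0 hx h'.
      have -> : 1 - (1 - eta * v') = eta * v' by ring.
      nra.
    + have h : 1 < expR (r2 * (1 - a2 - (1 - eta * u') + a2 * (1 - eta * v'))).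
        by rewrite expR_gt1; apply: mulr_gt0 => //; nra.
      have hx : 0 < 1 - eta * u' by nra.
      have h' : 0 < expR (r2 * (1 - a2 - (1 - eta * u') + a2 * (1 - eta * v'))) - 1 by rewrite subr_gt0.
      have := mulr_gt0 hx h'; nra.
move=> [x y] [x' y'] /= [Fp [p0 p1]] [Fq [q0 q1]] pq [/= le1 le2].
have [[e1 e2]|[hx hy hx1 hy0]] := @fixchar R r1 r2 a1 a2 l1 l2 x y r10 r20 ha1 ha2 k1 k2 Fp p0 p1;
have [[e1' e2']|[hx' hy' hx1' hy0']] := @fixchar R r1 r2 a1 a2 l1 l2 x' y' r10 r20 ha1 ha2 k1 k2 Fq q0 q1.
- by apply: pq; rewrite e1 e2 e1' e2'.
- lra.
- lra.
- apply: pq.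
  have hyy : (y - y') * (a1 * a2 - 1) = 0.
    rewrite hx hx' in hy hy'. nra.
  move/eqP: hyy; rewrite mulf_eq0 => /orP[/eqP h|/eqP h]; last by exfalso; nra.
  have ey : y = y' by lra.
  by rewrite hx hx' ey.
Qed.
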